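(* Let $\pi$ be a positive continuous probability density on $\mathbb{R}$ and $q:\mathbb{R}^2\to[0,\infty)$ a bounded continuous function with $q(x,\cdot)$ a probability density for each $x$ and, for some $s>0$, $q(x,x+u)=0$ whenever $|u|>s$. Then for every $a>0$, $\|T_{a^c}\|_2\le\beta_a$, where $\beta_a:=\int_{-s}^{s}\sup_{|x|>a}\sqrt{t(x,x+u)\,t(x+u,x)}\,du$.
   Context: $L^2(\pi)$ is the $L^2$ space of the probability measure $\pi(y)dy$, with operator norm $\|\cdot\|_2$. Set $t(x,y):=\min(q(x,y),\pi(y)q(y,x)/\pi(x))$, $(Tf)(x):=\int_{\mathbb{R}}f(y)t(x,y)\,dy$, and $T_{a^c}f:=1_{\mathbb{R}\setminus[-a,a]}\cdot Tf$. *)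

(* Defs.v *)
From HB Require Import structures.
From mathcomp Require Import all_boot all_order all_algebra.
From mathcomp Require Import all_classical all_reals all_analysis.
Set Implicit Arguments. Unset Strict Implicit. Unset Printing Implicit Defensive.
Import Order.TTheory GRing.Theory Num.Theory.
Import numFieldNormedType.Exports.
Local Open Scope classical_set_scope.
Local Open Scope ring_scope.

Section Defs.
Variable R : realType.
Notation leb := (@lebesgue_measure R).

Definition tker (pi : R -> R) (q : R -> R -> R) (x y : R) : R :=
  Num.min (q x y) (pi y * q y x / pi x).

Definition Top (pi : R -> R) (q : R -> R -> R) (f : R -> R) (x : R) : R :=
  Rintegral leb setT (fun y => f y * tker pi q x y).

Definition Tac (pi : R -> R) (q : R -> R -> R) (a : R) (f : R -> R) (x : R) : R :=
  if a < `|x| then Top pi q f x else 0.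

Definition L2norm (pi : R -> R) (g : R -> R) : \bar R :=
  ((\int[leb]_x ((g x ^+ 2 * pi x)%:E)) `^ (2^-1))%E.

Definition isL2 (pi : R -> R) (f : R -> R) : Prop :=
  measurable_fun setT f /\ (\int[leb]_x ((f x ^+ 2 * pi x)%:E) < +oo)%E.

Definition opnorm2 (pi : R -> R) (A : (R -> R) -> (R -> R)) : \bar R :=
  ereal_sup [set L2norm pi (A f) | f in [set f | isL2 pi f /\ (L2norm pi f <= 1)%E]].

Definition beta (pi : R -> R) (q : R -> R -> R) (s a : R) : \bar R :=
  (\int[leb]_(u in `[(- s)%R, s]%classic)
     ereal_sup [set (Num.sqrt (tker pi q x (x + u) * tker pi q (x + u) x)%R)%:E
               | x in [set x : R | (a < `|x|)%R]])%E.
End Defs.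

(* Main.v *)
Require Import Defs.
From HB Require Import structures.
From mathcomp Require Import all_boot all_order all_algebra.
From mathcomp Require Import all_classical all_reals all_analysis.
Import Order.TTheory GRing.Theory Num.Theory.
Import numFieldNormedType.Exports.
Local Open Scope classical_set_scope.
Local Open Scope ring_scope.

From mathcomp Require Import measurable_realfun.

Section Helpers.
Context {R : realType}.



Lemma cont_pair (F G : R -> R) (Q : R -> R -> R) :
  continuous (fun p : R * R => Q p.1 p.2) -> continuous F -> continuous G ->
  continuous (fun u => Q (F u) (G u)).
Proof.
move=> cQ cF cG u.
have := @continuous_comp _ _ _ (fun u => (F u, G u)) (fun p : R * R => Q p.1 p.2) u; apply.
  exact: (cvg_pair (cF u) (cG u)).
exact: cQ.
Qed.

Lemma cont_t (pi : R -> R) (q : R -> R -> R) (F G : R -> R) :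
  continuous pi -> (forall x, 0 < pi x) -> continuous (fun p : R * R => q p.1 p.2) ->
  continuous F -> continuous G ->
  continuous (fun u => tker pi q (F u) (G u)).
Proof.
move=> cpi pi0 cq cF cG u; rewrite /tker.
have := @continuous_min R R (fun u => q (F u) (G u)) (fun u => pi (G u) * q (G u) (F u) / pi (F u)) u.
apply.
  exact: cont_pair.
apply: continuousM; first apply: continuousM.
- exact: (continuous_comp (cG u) (cpi _)).
- exact: (@cont_pair G F q cq cG cF).
- apply: continuousV; first by rewrite gt_eqF.
  exact: (continuous_comp (cF u) (cpi _)).
Qed.
Local Open Scope ereal_scope.
Notation leb := (@lebesgue_measure R).





Lemma shift_integral (u : R) (g : R -> \bar R) :
  measurable_fun setT g -> (forall x, 0 <= g x) ->
  \int[leb]_x g (x + u)%R = \int[leb]_x g x.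
Proof.
move=> mg g0.
have mphi : measurable_fun (setT : set (measurableTypeR R)) ((fun x : R => x + u)%R : measurableTypeR R -> measurableTypeR R).
  by apply: continuous_measurable_fun => x; apply: continuousD => //; exact: cvg_cst.
have := @ge0_integral_pushforward _ _ (measurableTypeR R) (measurableTypeR R) R _ mphi lebesgue_measure _ _ measurableT mg (fun y _ => g0 y).
rewrite preimage_setT => <-.
apply: eq_measure_integral => A mA _; apply/esym.
apply: (@lebesgue_measure_unique R (measure_function_pushforward__canonical__measure_function_Measure lebesgue_measure mphi)) => // X /ocitvP [->|[[a b]] /= ab ->].
  by rewrite !measure0.
rewrite /pushforward.
have -> : (fun x : R => x + u)%R @^-1` `]a, b]%classic = `](a - u)%R, (b - u)%R]%classic.
  apply/seteqP; split => x /=; rewrite !in_itv /=.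
  by rewrite ltrBlDr lerBrDr.
  by rewrite ltrBlDr lerBrDr.
have := @lebesgue_measure_itv R (Interval (BRight (a - u)%R) (BRight (b - u)%R)); have := @lebesgue_measure_itv R (Interval (BRight a) (BRight b)).
move=> /= -> ->; rewrite /= !lte_fin ltrD2r ab -!EFinD; congr (_%:E).
by rewrite opprB addrA subrK.
Qed.





Lemma wCS (w G : R -> R) : measurable_fun setT w -> measurable_fun setT G ->
  (forall u, 0 <= w u)%R -> (forall u, 0 <= G u)%R ->
  (\int[leb]_u (w u * G u)%:E) ^+ 2 <=
  (\int[leb]_u (w u)%:E) * \int[leb]_u (w u * G u ^+ 2)%:E.
Proof.
move=> mw mG w0 G0.
set f1 := fun u => Num.sqrt (w u).
set f2 := fun u => (Num.sqrt (w u) * G u)%R.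
have msq : measurable_fun setT (@Num.sqrt R) by apply: continuous_measurable_fun; exact: sqrt_continuous.
have mf1 : measurable_fun setT f1 by apply: measurableT_comp msq mw.
have mf2 : measurable_fun setT f2 by apply: measurable_funM => //; exact: measurableT_comp msq mw.
have h2 : (2^-1 + 2^-1 = 1 :> R)%R by rewrite [RHS](splitr 1) div1r.
have H := hoelder leb mf1 mf2 (ltr0Sn _ 1) (ltr0Sn _ 1) h2.
rewrite Lnorm1 !unlock /= in H.
have E1 x : `|f1 x * f2 x|%R = (w x * G x)%R.
  rewrite /f1 /f2 mulrA -expr2 sqr_sqrtr // ger0_norm //; exact: mulr_ge0.
have E2 x : (`|f1 x| `^ 2)%R = w x.
  by rewrite ger0_norm ?sqrtr_ge0 // powR_mulrn ?sqrtr_ge0 // sqr_sqrtr.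
have E3 x : (`|f2 x| `^ 2)%R = (w x * G x ^+ 2)%R.
  rewrite ger0_norm ?mulr_ge0 ?sqrtr_ge0 // powR_mulrn ?mulr_ge0 ?sqrtr_ge0 //.
  by rewrite exprMn sqr_sqrtr.
have F1 : (fun x => `|f1 x * f2 x|%:E) = (fun x => (w x * G x)%:E) by apply: funext => x; rewrite E1.
have F2 : (fun x => (`|f1 x| `^ 2)%:E) = (fun x => (w x)%:E) by apply: funext => x; rewrite E2.
have F3 : (fun x => (`|f2 x| `^ 2)%:E) = (fun x => (w x * G x ^+ 2)%:E) by apply: funext => x; rewrite E3.
rewrite F1 F2 F3 in H.
have S10 : 0 <= \int[leb]_u (w u)%:E by apply: integral_ge0 => u _; rewrite lee_fin.
have S20 : 0 <= \int[leb]_u (w u * G u ^+ 2)%:E.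
  by apply: integral_ge0 => u _; rewrite lee_fin mulr_ge0 ?sqr_ge0.
have A0 : 0 <= \int[leb]_u (w u * G u)%:E.
  by apply: integral_ge0 => u _; rewrite lee_fin mulr_ge0.
rewrite !poweR12_sqrt // -sqrteM // in H.
rewrite -(lee_sqrt _ (mule_ge0 S10 S20)) sqrte_sqr gee0_abs //.
Qed.

Lemma le_integral_nm (f g : R -> \bar R) :
  (forall x, 0 <= f x) -> (forall x, f x <= g x) -> \int[leb]_x f x <= \int[leb]_x g x.
Proof.
move=> f0 fg.
have g0 x : 0 <= g x by apply: le_trans (f0 x) (fg x).
rewrite !ge0_integralTE//; apply: ereal_sup_le => _ [h hf <-]; exists h => //= x.
exact: le_trans (hf x) (fg x).
Qed.

Lemma abs_Rint (phi : R -> R) : measurable_fun setT phi ->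
  (`|Rintegral leb setT phi|)%:E <= \int[leb]_x (`|phi x|)%:E.
Proof.
move=> mphi; rewrite /Rintegral.
apply: le_trans (_ : `|\int[leb]_(x in setT) (phi x)%:E| <= _).
  have gen (X : \bar R) : `|fine X|%:E <= `|X|.
    by case: X => [r| |] /=; [rewrite lexx | exact: leey | exact: leey].
  exact: gen.
apply: le_trans (le_abse_integral _ _ _) _ => //.
  exact/measurable_EFinP.
Qed.
End Helpers.

Theorem proposition3p3 (R : realType) (pi : R -> R) (q : R -> R -> R) (s : R)
  (pi_cont : continuous pi)
  (pi_pos : forall x, 0 < pi x)
  (pi_dens : (\int[@lebesgue_measure R]_x (pi x)%:E = 1)%E)
  (q_cont : continuous (fun p : R * R => q p.1 p.2))
  (q_ge0 : forall x y, 0 <= q x y)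
  (q_bdd : exists M : R, forall x y, q x y <= M)
  (q_dens : forall x, (\int[@lebesgue_measure R]_y (q x y)%:E = 1)%E)
  (s_gt0 : 0 < s)
  (q_supp : forall x u, s < `|u| -> q x (x + u) = 0) :
  forall a : R, 0 < a ->
    (opnorm2 pi (Tac pi q a) <= beta pi q s a)%E.


Proof.
move=> a a0.
have [M qM] := q_bdd.
have M0 : 0 <= M := le_trans (q_ge0 0 0) (qM 0 0).
have t0 x y : 0 <= tker pi q x y.
  rewrite /tker le_min q_ge0 /=; apply: divr_ge0; last exact: ltW.
  by apply: mulr_ge0 => //; exact: ltW.
have tq x y : tker pi q x y <= q x y by rewrite /tker ge_min lexx.
have db x y : tker pi q x y * pi x = tker pi q y x * pi y.
  rewrite /tker !minr_pMl ?ltW // !divfK ?gt_eqF // minC.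
  by rewrite [q x y * _]mulrC [q y x * _]mulrC.
pose ph x u := Num.sqrt (tker pi q x (x + u) * tker pi q (x + u) x).
pose h u := ereal_sup [set (ph x u)%:E | x in [set x : R | (a < `|x|)%R]].
have ph0 x u : 0 <= ph x u by exact: sqrtr_ge0.
have phh x u : a < `|x| -> ((ph x u)%:E <= h u)%E.
  by move=> ax; apply: ereal_sup_ubound; exists x.
have h0 u : (0 <= h u)%E.
  apply: le_trans (phh (a + 1) u _); first by rewrite lee_fin.
  by rewrite ger0_norm ?ltrDl // addr_ge0 // ltW.
have hM u : (h u <= M%:E)%E.
  apply: ge_ereal_sup => _ [x _ <-]; rewrite lee_fin.
  apply: le_trans (_ : Num.sqrt (M ^+ 2) <= M); last by rewrite sqrtr_sqr ger0_norm.
  apply: ler_wsqrtr; rewrite expr2; apply: ler_pM => //.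
    exact: le_trans (tq _ _) (qM _ _).
  exact: le_trans (tq _ _) (qM _ _).
have hfin u : h u = (fine (h u))%:E.
  rewrite fineK // ge0_fin_numE //; exact: le_lt_trans (hM u) (ltry _).
have ccst (c : R) : continuous (fun _ : R => c) by move=> ?; exact: cvg_cst.
have cadd (c : R) : continuous (fun u : R => c + u).
  by move=> u; apply: continuousD => //; exact: cvg_cst.
have cph x : continuous (ph x).
  move=> u; apply: continuous_comp; last exact: sqrt_continuous.
  apply: continuousM.
    have := (@cont_t R pi q (fun _ => x) (fun u => x + u) pi_cont pi_pos q_cont (ccst x) (cadd x) u); exact.
  have := (@cont_t R pi q (fun u => x + u) (fun _ => x) pi_cont pi_pos q_cont (cadd x) (ccst x) u); exact.
have hlsc : lower_semicontinuous h.
  move=> u0 c /ereal_sup_gt [_ [x xa <-]] cx.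
  exists [set u | c < ph x u].
    rewrite lte_fin in cx; exact: (cvgr_gt _ (cph x u0) _ cx).
  move=> y /= cy; apply: lt_le_trans (phh x y xa); by rewrite lte_fin.
have mh : measurable_fun setT h := lower_semicontinuous_measurable hlsc.
pose D := `[(- s)%R, s]%classic : set R.
have Dmem u : (u \in D) = (`|u| <= s).
  rewrite /D; apply/idP/idP; first by rewrite inE /= in_itv /= ler_norml.
  by rewrite ler_norml => H; rewrite inE /= in_itv /= H.
pose w u := fine (h u) * \1_D u.
have w0 u : 0 <= w u.
  by rewrite /w indicE; apply: mulr_ge0; [exact: fine_ge0 | exact: ler0n].
have mw : measurable_fun setT w.
  apply: measurable_funM; first exact: measurableT_comp (fine_measurable measurableT) mh.
  by apply: measurable_indic; exact: measurable_itv.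
have betaE : beta pi q s a = (\int[lebesgue_measure]_u (w u)%:E)%E.
  rewrite /beta integral_mkcond; apply: eq_integral => u _.
  rewrite /patch /w indicE; case: ifPn => uD; first by rewrite mulr1 -hfin.
  by rewrite mulr0.
have key x u : a < `|x| ->
    tker pi q x (x + u) * Num.sqrt (pi x) <= w u * Num.sqrt (pi (x + u)).
  move=> ax; have [us|us] := leP (`|u|) s.
    rewrite /w indicE Dmem us mulr1.
    have -> : tker pi q x (x + u) * Num.sqrt (pi x) = ph x u * Num.sqrt (pi (x + u)).
      rewrite /ph -sqrtrM; last exact: mulr_ge0.
      rewrite -mulrA (db (x + u) x) mulrA -expr2 sqrtrM ?sqr_ge0 // sqrtr_sqr.
      by rewrite ger0_norm.
    apply: ler_wpM2r; first exact: sqrtr_ge0.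
    by rewrite -lee_fin -hfin; apply: phh.
  have -> : tker pi q x (x + u) = 0.
    by apply/eqP; rewrite eq_le t0 andbT -(q_supp x u us) tq.
  by rewrite mul0r; apply: mulr_ge0 => //; exact: sqrtr_ge0.
have msq : measurable_fun setT (@Num.sqrt R).
  by apply: continuous_measurable_fun; exact: sqrt_continuous.
have mpi : measurable_fun setT pi by exact: continuous_measurable_fun.
rewrite betaE.
apply: ge_ereal_sup => _ [f [[mf fint] fn] <-].
set B := (\int[lebesgue_measure]_u (w u)%:E)%E.
have B0 : (0 <= B)%E by apply: integral_ge0 => u _; rewrite lee_fin.
have [->|Boo] := eqVneq B +oo%E; first exact: leey.
have Bfin : B \is a fin_num by rewrite ge0_fin_numE // ltey.
pose P y := f y ^+ 2 * pi y.
pose G y := `|f y| * Num.sqrt (pi y).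
have P0 y : 0 <= P y by apply: mulr_ge0; [exact: sqr_ge0 | exact: ltW].
have G0 y : 0 <= G y by apply: mulr_ge0; [exact: normr_ge0 | exact: sqrtr_ge0].
have GP y : G y ^+ 2 = P y.
  by rewrite /G exprMn sqr_sqrtr ?real_normK ?num_real // ltW.
have mP : measurable_fun setT P.
  by apply: measurable_funM => //; exact: measurable_funX.
have mG : measurable_fun setT G.
  apply: measurable_funM; first by apply: measurableT_comp => //; exact: normr_measurable.
  exact: measurableT_comp msq mpi.
set N := (\int[lebesgue_measure]_x (P x)%:E)%E.
have N0 : (0 <= N)%E by apply: integral_ge0 => x _; rewrite lee_fin.
have N1 : (N <= 1)%E.
  move: fn; rewrite /L2norm -/P -/N poweR12_sqrt // => H.
  have s1 : sqrte (1 : \bar R) = 1%E by rewrite /sqrte /= sqrtr1.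
  by rewrite -lee_sqrt ?lee01 // s1.
have mshift (c : R) : measurable_fun setT (fun u : R => u + c).
  apply: continuous_measurable_fun => u.
  by apply: continuousD => //; exact: cvg_cst.
have mshift' (c : R) : measurable_fun setT (fun u : R => c + u).
  by apply: continuous_measurable_fun; exact: cadd.
have C1 x : ((Tac pi q a f x ^+ 2 * pi x)%:E <=
             (\int[lebesgue_measure]_u (w u * G (x + u))%:E) ^+ 2)%E.
  rewrite /Tac; case: ifPn => ax; last first.
    by rewrite expr2 !mul0r; exact: sqre_ge0.
  set T0 := Top pi q f x.
  pose K y := `|f y * tker pi q x y|.
  have K0 y : 0 <= K y by exact: normr_ge0.
  have mft : measurable_fun setT (fun y => f y * tker pi q x y).
    apply: measurable_funM => //; apply: continuous_measurable_fun.
    exact: (@cont_t R pi q (fun _ => x) (fun u => u) pi_cont pi_pos q_cont (ccst x) (fun u => cvg_id)).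
  have mK : measurable_fun setT K.
    by apply: measurableT_comp => //; exact: normr_measurable.
  have sq0 : 0 <= Num.sqrt (pi x) by exact: sqrtr_ge0.
  have H1 : ((`|T0| * Num.sqrt (pi x))%:E <=
             \int[lebesgue_measure]_u (K (u + x) * Num.sqrt (pi x))%:E)%E.
    rewrite EFinM (eq_integral (fun u : measurableTypeR R => (K (u + x))%:E * (Num.sqrt (pi x))%:E)%E); last first.
      by move=> u _; rewrite EFinM.
    rewrite ge0_integralZr //; last 2 first.
    - by apply/measurable_EFinP; exact: measurableT_comp mK (mshift x).
    - by move=> u _; rewrite lee_fin.
    apply: lee_pmul => //.
    have := shift_integral x (fun y => (K y)%:E) _ _.
    move=> /= ->; last 2 first.
    - exact/measurable_EFinP.
    - by move=> y; rewrite lee_fin.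
    exact: (abs_Rint (fun y => f y * tker pi q x y) mft).
  have H2 : (\int[lebesgue_measure]_u (K (u + x) * Num.sqrt (pi x))%:E <=
             \int[lebesgue_measure]_u (w u * G (x + u))%:E)%E.
    apply: le_integral_nm => u; first by rewrite lee_fin mulr_ge0.
    rewrite lee_fin /K normrM (ger0_norm (t0 _ _)) [u + x]addrC /G.
    rewrite -mulrA [w u * _]mulrCA; apply: ler_wpM2l => //; exact: key.
  have E : ((T0 ^+ 2 * pi x)%:E = ((`|T0| * Num.sqrt (pi x))%:E) ^+ 2)%E.
    by rewrite -EFin_expe exprMn real_normK ?num_real // sqr_sqrtr // ltW.
  rewrite E !expe2; have H := le_trans H1 H2.
  by apply: lee_pmul => //; rewrite lee_fin mulr_ge0.
have C2 x : ((\int[lebesgue_measure]_u (w u * G (x + u))%:E) ^+ 2 <=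
             B * \int[lebesgue_measure]_u (w u * P (x + u))%:E)%E.
  have := wCS w (fun u => G (x + u)) mw (measurableT_comp mG (mshift' x)) w0 (fun u => G0 (x + u)).
  have -> : (fun u => (w u * G (x + u) ^+ 2)%:E) = (fun u => (w u * P (x + u))%:E).
    by apply: funext => u; rewrite GP.
  by [].
pose F := fun z : measurableTypeR R * measurableTypeR R => (w z.2 * P (z.1 + z.2))%:E.
have F0 z : (0 <= F z)%E by rewrite lee_fin mulr_ge0.
have mF : measurable_fun setT F.
  apply/measurable_EFinP; apply: measurable_funM.
    exact: measurableT_comp mw measurable_snd.
  apply: measurableT_comp mP _.
  exact: measurable_funD measurable_fst measurable_snd.
have FE : (\int[lebesgue_measure]_x \int[lebesgue_measure]_u (w u * P (x + u))%:E = B * N)%E.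
  have := @fubini_tonelli _ _ _ _ R lebesgue_measure lebesgue_measure F mF F0.
  rewrite /F /= => ->.
  rewrite (eq_integral (fun u : measurableTypeR R => (w u)%:E * N)%E); last first.
    move=> u _.
    rewrite (eq_integral (fun x : measurableTypeR R => (w u)%:E * (P (x + u))%:E)%E); last first.
      by move=> x _; rewrite EFinM.
    rewrite ge0_integralZl //; try (by move=> x _; rewrite lee_fin); try (by rewrite lee_fin);
      last by apply/measurable_EFinP; exact: measurableT_comp mP (mshift u).
    have := shift_integral u (fun y => (P y)%:E) _ _.
    move=> /= ->; last 2 first.
    - exact/measurable_EFinP.
    - by move=> y; rewrite lee_fin.
    by [].
  rewrite ge0_integralZr //.
  - by apply/measurable_EFinP.
  - by move=> u _; rewrite lee_fin.
set I := (\int[lebesgue_measure]_x ((Tac pi q a f x) ^+ 2 * pi x)%:E)%E.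
have I0 : (0 <= I)%E.
  by apply: integral_ge0 => x _; rewrite lee_fin mulr_ge0 ?sqr_ge0 // ltW.
have HI : (I <= B * (B * N))%E.
  apply: le_trans (_ : _ <= \int[lebesgue_measure]_x (B * \int[lebesgue_measure]_u (w u * P (x + u))%:E))%E _.
    apply: le_integral_nm => x; first by rewrite lee_fin mulr_ge0 ?sqr_ge0 // ltW.
    exact: le_trans (C1 x) (C2 x).
  rewrite ge0_integralZl //.
  - by rewrite FE.
  - exact: (measurable_fun_fubini_tonelli_F F mF F0).
  - by move=> x _; apply: integral_ge0 => u _; rewrite lee_fin mulr_ge0.
rewrite /L2norm -/I poweR12_sqrt //.
apply: le_trans (_ : sqrte I <= sqrte (B * B))%E _.
  rewrite lee_sqrt ?mule_ge0 //; apply: le_trans HI _.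
  apply: lee_pmul => //; first exact: mule_ge0.
  by rewrite -[leRHS]mule1; apply: lee_pmul.
by rewrite -expe2 sqrte_sqr gee0_abs.
Qed.
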